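(* Let $(X,d)$ be a complete metric space and $\mathcal S$ a semigroup acting on $X$. Assume there exists $k<\kappa(X)$ such that for all $(x,y)\in X\times X$ with $D(x,o(y))\le D(x,o(x))$ and for all $s\in\mathcal S$, $$\inf_{t\in\mathcal S^1} D(sx,o(tsy))\le k\,D(x,o(y)).$$ Then either all the orbits are unbounded or there exists $x\in X$ such that $sx=x$ for all $s\in\mathcal S$.
   Context: A semigroup action is a map $\mathcal S\times X\to X$, $(s,x)\mapsto sx$, with $(st)x=s(tx)$. $\mathcal S^1$ denotes $\mathcal S$ with an identity $1$ adjoined (acting as the identity map; $\mathcal S^1=\mathcal S$ if $\mathcal S$ already has an identity). The orbit of $x$ is $o(x)=\{x\}\cup\{sx:s\in\mathcal S\}$; for nonempty $C\subseteq X$, $D(x,C)=\sup\{d(x,y):y\in C\}$. $B(x,r)$ denotes the closed ball. For $c\ge1$, balls in $X$ are $c$-regular if for every $k'<c$ there are $\mu,\alpha\in(0,1)$ such that for all $x,y\in X$ and $r>0$ with $d(x,y)\ge(1-\mu)r$ there exists $z\in X$ with $B(x,(1+\mu)r)\cap B(y,k'(1+\mu)r)\subseteq B(z,\alpha r)$. The Lifschitz characteristic is $\kappa(X)=\sup\{c\ge1:\text{balls in }X\text{ are }c\text{-regular}\}$. *)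

(* Defs.v *)
From Stdlib Require Import Reals.
From Coquelicot Require Import Rbar Lub.
Open Scope R_scope.

Record is_metric {X : Type} (d : X -> X -> R) : Prop := {
  metric_nonneg : forall x y, 0 <= d x y;
  metric_eq0 : forall x y, d x y = 0 <-> x = y;
  metric_sym : forall x y, d x y = d y x;
  metric_triangle : forall x y z, d x z <= d x y + d y z }.

Definition cauchy_seq {X : Type} (d : X -> X -> R) (u : nat -> X) : Prop :=
  forall eps, 0 < eps -> exists N, forall m n, (N <= m)%nat -> (N <= n)%nat ->
    d (u m) (u n) < eps.

Definition seq_converges_to {X : Type} (d : X -> X -> R) (u : nat -> X) (l : X) : Prop :=
  forall eps, 0 < eps -> exists N, forall n, (N <= n)%nat -> d (u n) l < eps.

Definition complete_metric {X : Type} (d : X -> X -> R) : Prop :=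
  forall u : nat -> X, cauchy_seq d u -> exists l, seq_converges_to d u l.

Definition cball {X : Type} (d : X -> X -> R) (x : X) (r : R) : X -> Prop :=
  fun w => d x w <= r.

Definition c_regular {X : Type} (d : X -> X -> R) (c : R) : Prop :=
  forall k', k' < c ->
    exists mu alpha, 0 < mu < 1 /\ 0 < alpha < 1 /\
      forall x y r, 0 < r -> (1 - mu) * r <= d x y ->
        exists z, forall w,
          cball d x ((1 + mu) * r) w -> cball d y (k' * ((1 + mu) * r)) w ->
          cball d z (alpha * r) w.

Definition lifschitz_char {X : Type} (d : X -> X -> R) : Rbar :=
  Rbar_lub (fun v => exists c, v = Finite c /\ 1 <= c /\ c_regular d c).

Definition semigroup_action {S X : Type} (mul : S -> S -> S) (act : S -> X -> X) : Prop :=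
  (forall s t u, mul (mul s t) u = mul s (mul t u)) /\
  (forall s t x, act (mul s t) x = act s (act t x)).

Definition orbit {S X : Type} (act : S -> X -> X) (x : X) : X -> Prop :=
  fun y => y = x \/ exists s, y = act s x.

Definition Dsup {X : Type} (d : X -> X -> R) (x : X) (C : X -> Prop) : Rbar :=
  Rbar_lub (fun v => exists y, C y /\ v = Finite (d x y)).

Definition has_identity {S : Type} (mul : S -> S -> S) : Prop :=
  exists e, forall s, mul e s = s /\ mul s e = s.

(* The maps x |-> t x for t ∈ S^1: S^1 = S if S has an identity,
   otherwise S with an adjoined identity acting as the identity map. *)
Definition S1_map {S X : Type} (mul : S -> S -> S) (act : S -> X -> X) (f : X -> X) : Prop :=
  (exists t, f = act t) \/ (~ has_identity mul /\ f = (fun x => x)).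

Definition bounded_set {X : Type} (d : X -> X -> R) (C : X -> Prop) : Prop :=
  exists c M, forall y, C y -> d c y <= M.

(* Main.v *)
Require Import Defs.
From Stdlib Require Import Reals Lra Lia Classical ClassicalEpsilon.
From Coquelicot Require Import Rbar Lub.
Open Scope R_scope.

Lemma lub_corr (E : Rbar -> Prop) : Rbar_is_lub E (Rbar_lub E).
Proof. exact (proj2_sig (Rbar_ex_lub E)). Qed.
Lemma glb_corr (E : Rbar -> Prop) : Rbar_is_glb E (Rbar_glb E).
Proof. exact (proj2_sig (Rbar_ex_glb E)). Qed.

Lemma lub_ex (E : Rbar -> Prop) (a : R) :
  Rbar_lt (Finite a) (Rbar_lub E) -> exists v, E v /\ Rbar_lt (Finite a) v.
Proof.
  intros H. destruct (classic (exists v, E v /\ Rbar_lt (Finite a) v)) as [?|Hn]; auto.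
  exfalso. destruct (lub_corr E) as [_ Hl].
  assert (Rbar_le (Rbar_lub E) (Finite a)).
  { apply Hl. intros v Ev. apply Rbar_not_lt_le. intro. apply Hn; eauto. }
  exact (Rbar_lt_not_le _ _ H H0).
Qed.

Lemma glb_ex (E : Rbar -> Prop) (b : R) :
  Rbar_lt (Rbar_glb E) (Finite b) -> exists v, E v /\ Rbar_lt v (Finite b).
Proof.
  intros H. destruct (classic (exists v, E v /\ Rbar_lt v (Finite b))) as [?|Hn]; auto.
  exfalso. destruct (glb_corr E) as [_ Hl].
  assert (Rbar_le (Finite b) (Rbar_glb E)).
  { apply Hl. intros v Ev. apply Rbar_not_lt_le. intro. apply Hn; eauto. }
  exact (Rbar_lt_not_le _ _ H H0).
Qed.

Lemma D_ub {X} (d : X -> X -> R) x (C : X -> Prop) w :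
  C w -> Rbar_le (Finite (d x w)) (Dsup d x C).
Proof. intros Cw. destruct (lub_corr (fun v => exists y, C y /\ v = Finite (d x y))) as [H _].
  apply H. eauto. Qed.

Lemma D_le {X} (d : X -> X -> R) x (C : X -> Prop) M :
  (forall w, C w -> d x w <= M) -> Rbar_le (Dsup d x C) (Finite M).
Proof. intros HM. destruct (lub_corr (fun v => exists y, C y /\ v = Finite (d x y))) as [_ H].
  apply H. intros v [y [Cy ->]]. simpl. auto. Qed.

Lemma D_le_inv {X} (d : X -> X -> R) x (C : X -> Prop) M :
  Rbar_le (Dsup d x C) (Finite M) -> forall w, C w -> d x w <= M.
Proof. intros H w Cw. pose proof (Rbar_le_trans _ _ _ (D_ub d x C w Cw) H). exact H0. Qed.

Lemma D_fin {X} (d : X -> X -> R) x (C : X -> Prop) w0 r :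
  C w0 -> 0 <= d x w0 -> (forall w, C w -> d x w <= r) ->
  exists g, Dsup d x C = Finite g /\ 0 <= g /\ g <= r.
Proof.
  intros C0 H0 Hr. pose proof (D_ub d x C w0 C0) as L. pose proof (D_le d x C r Hr) as U.
  destruct (Dsup d x C) as [g| |]; simpl in *; try contradiction.
  exists g. split; [reflexivity|lra].
Qed.

Theorem theorem4p1 (X : Type) (d : X -> X -> R)
  (Hd : is_metric d) (Hcomplete : complete_metric d)
  (S : Type) (mul : S -> S -> S) (act : S -> X -> X)
  (Hact : semigroup_action mul act)
  (k : R) (Hk : Rbar_lt (Finite k) (lifschitz_char d))
  (Hyp : forall x y : X,
      Rbar_le (Dsup d x (orbit act y)) (Dsup d x (orbit act x)) ->
      forall s : S,
        Rbar_le
          (Rbar_glb (fun v => exists f, S1_map mul act f /\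
                       v = Dsup d (act s x) (orbit act (f (act s y)))))
          (Rbar_mult (Finite k) (Dsup d x (orbit act y)))) :
  (forall x : X, ~ bounded_set d (orbit act x)) \/
  (exists x : X, forall s : S, act s x = x).
Proof.
  destruct (classic (exists x0, bounded_set d (orbit act x0))) as [[x0 [c0 [M HM]]]|Hnb];
    [right | left; intros x Hx; apply Hnb; eauto].
  destruct Hact as [Hassoc Hcomp]. destruct Hd as [dpos deq dsym dtri].
  assert (dxx : forall x, d x x = 0) by (intro; apply deq; reflexivity).
  unfold lifschitz_char in Hk.
  destruct (lub_ex _ k Hk) as [v [[c [-> [Hc1 Hreg]]] Hkc]]. simpl in Hkc.
  set (kp := (Rmax k 0 + c)/2).
  assert (Hmc : Rmax k 0 < c) by (apply Rmax_lub_lt; lra).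
  assert (Hkpc : kp < c) by (unfold kp; lra).
  assert (Hkp0 : Rmax k 0 < kp) by (unfold kp; lra).
  assert (Hm0 : 0 <= Rmax k 0) by apply Rmax_r.
  assert (Hkm : k <= Rmax k 0) by apply Rmax_l.
  destruct (Hreg kp Hkpc) as [mu [alpha [Hmu [Hal Hreg']]]].
  set (beta := Rmax alpha (1-mu)).
  assert (Hb1 : beta < 1) by (apply Rmax_lub_lt; lra).
  assert (Hba : alpha <= beta) by apply Rmax_l.
  assert (Hbm : 1 - mu <= beta) by apply Rmax_r.
  assert (orb_self : forall y, orbit act y y) by (intro; left; reflexivity).
  assert (orb_sub : forall y s f, S1_map mul act f -> forall w,
             orbit act (f (act s y)) w -> orbit act y w).
  { intros y s f Hf w Hw. right.
    destruct Hf as [[t ->]|[_ ->]]; destruct Hw as [->|[u ->]].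
    - exists (mul t s). rewrite Hcomp. reflexivity.
    - exists (mul u (mul t s)). rewrite !Hcomp. reflexivity.
    - exists s. reflexivity.
    - exists (mul u s). rewrite Hcomp. reflexivity. }
  set (Dle := fun x y r => forall w, orbit act y w -> d x w <= r).
  assert (core : forall x y r, 0 < r -> Dle x y r ->
            Rbar_le (Dsup d x (orbit act y)) (Dsup d x (orbit act x)) ->
            exists x' y', Dle x' y' (beta * r) /\ d x x' <= 2 * r).
  { intros x y r Hr Hxy Hpre.
    destruct (classic (exists s, (1 - mu) * r <= d x (act s x))) as [[s Hs]|Hns].
    - destruct (D_fin d x (orbit act y) y r (orb_self y) (dpos _ _) Hxy) as [g [Eg [Hg0 Hgr]]].
      pose proof (Hyp x y Hpre s) as H. rewrite Eg in H. simpl in H.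
      assert (Hlt : k * g < kp * ((1 + mu) * r)).
      { assert (k * g <= Rmax k 0 * g) by (apply Rmult_le_compat_r; lra).
        assert (Rmax k 0 * g <= Rmax k 0 * r) by (apply Rmult_le_compat_l; lra).
        assert (Rmax k 0 * r < kp * r) by (apply Rmult_lt_compat_r; lra).
        assert (kp * r <= kp * ((1 + mu) * r)) by (apply Rmult_le_compat_l; nra).
        lra. }
      destruct (glb_ex _ (kp * ((1 + mu) * r))
                  (Rbar_le_lt_trans _ _ (Finite (kp * ((1 + mu) * r))) H Hlt)) as [v [[f [Hf ->]] Hv]].
      pose proof (D_le_inv _ _ _ _ (Rbar_lt_le _ _ Hv)) as Hsx.
      destruct (Hreg' x (act s x) r Hr Hs) as [z Hz].
      exists z, (f (act s y)). split.
      + intros w Hw. assert (d z w <= alpha * r).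
        { apply Hz.
          - unfold cball. pose proof (Hxy w (orb_sub y s f Hf w Hw)). nra.
          - unfold cball. apply Hsx; auto. }
        nra.
      + set (w0 := f (act s y)).
        assert (d x w0 <= r) by (apply Hxy; apply (orb_sub y s f Hf); apply orb_self).
        assert (d z w0 <= alpha * r).
        { apply Hz.
          - unfold cball. nra.
          - unfold cball. apply Hsx; auto. }
        pose proof (dtri x w0 z). rewrite (dsym w0 z) in H2. nra.
    - exists x, x. split.
      + intros w [->|[s ->]].
        * rewrite dxx. nra.
        * assert (d x (act s x) < (1 - mu) * r).
          { apply Rnot_le_lt. intro. apply Hns. eauto. }
          nra.
      + rewrite dxx. lra. }
  assert (step : forall x y r, 0 <= r -> Dle x y r ->
            exists x' y', Dle x' y' (beta * r) /\ d x x' <= 2 * r).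
  { intros x y r Hr Hxy. destruct (Rle_lt_or_eq_dec _ _ Hr) as [Hr'|<-].
    - destruct (classic (Rbar_le (Dsup d x (orbit act y)) (Dsup d x (orbit act x)))) as [Hp|Hp].
      + apply (core x y r); auto.
      + apply (core x x r); auto; [|apply Rbar_le_refl].
        apply Rbar_not_le_lt in Hp.
        intros w Hw. apply (D_le_inv d x (orbit act x) r); [|exact Hw]. apply Rbar_lt_le.
        exact (Rbar_lt_le_trans _ _ _ Hp (D_le _ _ _ _ Hxy)).
    - exists x, y. rewrite Rmult_0_r. split; auto. rewrite dxx. lra. }
  assert (HM0 : 0 <= M) by (pose proof (HM x0 (orb_self x0)); pose proof (dpos c0 x0); lra).
  set (r0 := 2 * M).
  assert (Hr0 : 0 <= r0) by (unfold r0; lra).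
  assert (Hbeta0 : 0 < beta) by lra.
  assert (Hpow0 : forall n, 0 <= beta ^ n) by (intro; apply pow_le; lra).
  assert (G : forall (n : nat) (p : X * X), exists p' : X * X,
             Dle (fst p) (snd p) (beta ^ n * r0) ->
             Dle (fst p') (snd p') (beta ^ (Datatypes.S n) * r0) /\
             d (fst p) (fst p') <= 2 * (beta ^ n * r0)).
  { intros n p. destruct (classic (Dle (fst p) (snd p) (beta ^ n * r0))) as [H|H].
    - assert (0 <= beta ^ n * r0) by (apply Rmult_le_pos; auto).
      destruct (step _ _ _ H0 H) as [x' [y' [H1 H2]]].
      exists (x', y'). intros _. simpl. split; auto.
      replace (beta * beta ^ n * r0) with (beta * (beta ^ n * r0)) by ring. exact H1.
    - exists p. tauto. }
  set (g := fun n p => proj1_sig (constructive_indefinite_description _ (G n p))).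
  assert (Hg : forall n p, Dle (fst p) (snd p) (beta ^ n * r0) ->
             Dle (fst (g n p)) (snd (g n p)) (beta ^ (Datatypes.S n) * r0) /\
             d (fst p) (fst (g n p)) <= 2 * (beta ^ n * r0)).
  { intros n p. exact (proj2_sig (constructive_indefinite_description _ (G n p))). }
  set (P := fun n => nat_rect (fun _ => (X * X)%type) (x0, x0) (fun n p => g n p) n).
  assert (HPS : forall n, P (Datatypes.S n) = g n (P n)) by reflexivity.
  assert (Hinv : forall n, Dle (fst (P n)) (snd (P n)) (beta ^ n * r0)).
  { induction n.
    - simpl. intros w Hw. pose proof (HM w Hw). pose proof (HM x0 (orb_self x0)).
      pose proof (dtri x0 c0 w). rewrite (dsym x0 c0) in H1. unfold r0. lra.
    - rewrite HPS. apply Hg. exact IHn. }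
  set (xs := fun n => fst (P n)).
  set (ys := fun n => snd (P n)).
  assert (Hdist : forall n, d (xs n) (xs (Datatypes.S n)) <= 2 * (beta ^ n * r0)).
  { intro n. unfold xs. rewrite HPS. apply Hg. apply Hinv. }
  assert (Hcb : forall n m, (1 - beta) * d (xs n) (xs (n + m)%nat) <= 2 * r0 * (beta ^ n - beta ^ (n + m))).
  { intros n m. induction m.
    - rewrite Nat.add_0_r, dxx. lra.
    - rewrite Nat.add_succ_r.
      pose proof (dtri (xs n) (xs (n + m)%nat) (xs (Datatypes.S (n + m)))).
      pose proof (Hdist (n + m)%nat).
      simpl pow. set (B := beta ^ (n + m)) in *.
      assert ((1 - beta) * d (xs n) (xs (Datatypes.S (n + m))) <= (1 - beta) * (d (xs n) (xs (n + m)%nat) + 2 * (B * r0))).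
      { apply Rmult_le_compat_l; lra. }
      nra. }
  assert (Hcauchy : cauchy_seq d xs).
  { intros eps Heps.
    assert (Hy : 0 < eps * (1 - beta) / (2 * r0 + 1)).
    { apply Rdiv_lt_0_compat; [apply Rmult_lt_0_compat|]; lra. }
    destruct (pow_lt_1_zero beta ltac:(rewrite Rabs_right; lra) _ Hy) as [N HN].
    exists N.
    assert (Hmain : forall n m, (N <= n)%nat -> (n <= m)%nat -> d (xs n) (xs m) < eps).
    { intros n m Hn Hnm. replace m with (n + (m - n))%nat by lia.
      pose proof (Hcb n (m - n)%nat).
      pose proof (HN n Hn). rewrite Rabs_right in H0 by (apply Rle_ge; auto).
      pose proof (Hpow0 (n + (m - n))%nat).
      assert (beta ^ n * (2 * r0 + 1) < eps * (1 - beta)).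
      { apply (Rmult_lt_compat_r (2 * r0 + 1)) in H0; [|lra].
        unfold Rdiv in H0. rewrite Rmult_assoc, Rinv_l in H0 by lra. lra. }
      assert ((1 - beta) * d (xs n) (xs (n + (m - n))%nat) < (1 - beta) * eps) by nra.
      apply Rmult_lt_reg_l in H3; lra. }
    intros n m Hn Hm. destruct (Nat.le_ge_cases n m).
    - apply Hmain; auto.
    - rewrite dsym. apply Hmain; auto. }
  destruct (Hcomplete xs Hcauchy) as [xst Hconv].
  exists xst. intro s.
  assert (Hsmall : forall eps, 0 < eps -> d xst (act s xst) < eps).
  { intros eps Heps.
    set (K := Rabs k).
    assert (HK : 0 <= K) by apply Rabs_pos.
    set (e1 := eps / (2 * K + 3)).
    assert (He1 : 0 < e1) by (apply Rdiv_lt_0_compat; lra).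
    assert (Heps1 : eps = (2 * K + 3) * e1) by (unfold e1; field; lra).
    destruct (Hconv e1 He1) as [N1 HN1].
    assert (Hy : 0 < e1 / (r0 + 1)) by (apply Rdiv_lt_0_compat; lra).
    destruct (pow_lt_1_zero beta ltac:(rewrite Rabs_right; lra) _ Hy) as [N2 HN2].
    set (n := Nat.max N1 N2).
    pose proof (HN1 n (Nat.le_max_l _ _)) as Hx.
    pose proof (HN2 n (Nat.le_max_r _ _)) as Hb.
    rewrite Rabs_right in Hb by (apply Rle_ge; auto).
    assert (Hbr : beta ^ n * r0 <= e1).
    { apply (Rmult_lt_compat_r (r0 + 1)) in Hb; [|lra].
      unfold Rdiv in Hb. rewrite Rmult_assoc, Rinv_l in Hb by lra.
      pose proof (Hpow0 n). nra. }
    set (e := d (xs n) xst + beta ^ n * r0).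
    assert (He : e < 2 * e1) by (unfold e; lra).
    assert (He0 : 0 <= e) by (unfold e; pose proof (dpos (xs n) xst); pose proof (Hpow0 n); nra).
    assert (Hle : Dle xst (ys n) e).
    { intros w Hw. pose proof (Hinv n w Hw). pose proof (dtri xst (xs n) w).
      rewrite (dsym xst (xs n)) in H0. unfold e, xs. fold (xs n) in *. lra. }
    destruct (classic (Rbar_le (Dsup d xst (orbit act (ys n))) (Dsup d xst (orbit act xst)))) as [Hp|Hp].
    - destruct (D_fin d xst (orbit act (ys n)) (ys n) e (orb_self _) (dpos _ _) Hle) as [gm [Eg [Hg0 Hge]]].
      pose proof (Hyp xst (ys n) Hp s) as H. rewrite Eg in H. simpl in H.
      assert (Hlt : k * gm < K * e + e1).
      { assert (k * gm <= K * gm) by (apply Rmult_le_compat_r; [lra|apply Rle_abs]).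
        assert (K * gm <= K * e) by (apply Rmult_le_compat_l; lra).
        lra. }
      destruct (glb_ex _ (K * e + e1)
                  (Rbar_le_lt_trans _ _ (Finite (K * e + e1)) H Hlt)) as [v [[f [Hf ->]] Hv]].
      pose proof (D_le_inv _ _ _ _ (Rbar_lt_le _ _ Hv)) as Hsx.
      set (w0 := f (act s (ys n))).
      assert (d (act s xst) w0 <= K * e + e1) by (apply Hsx; apply orb_self).
      assert (d xst w0 <= e) by (apply Hle; apply (orb_sub (ys n) s f Hf); apply orb_self).
      pose proof (dtri xst w0 (act s xst)). rewrite (dsym w0 (act s xst)) in H2.
      assert (K * e <= K * (2 * e1)) by (apply Rmult_le_compat_l; lra).
      lra.
    - apply Rbar_not_le_lt in Hp.
      pose proof (D_le_inv d xst (orbit act xst) e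
        (Rbar_lt_le _ _ (Rbar_lt_le_trans _ _ _ Hp (D_le _ _ _ _ Hle)))) as H.
      assert (d xst (act s xst) <= e) by (apply H; right; exists s; reflexivity).
      assert (0 <= K * e1) by (apply Rmult_le_pos; lra).
      lra. }
  symmetry. apply deq.
  destruct (Rle_lt_dec (d xst (act s xst)) 0) as [H|H].
  - pose proof (dpos xst (act s xst)). lra.
  - pose proof (Hsmall _ H). lra.
Qed.
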